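(* Consider the Biased Preferential Attachment Model (BPAM) with two communities, minority ratio $r$ and homophily parameter $\rho$, with asymptotic red edge fraction $\alpha$ and quantities $q_{BB}, q_{RB}$ and $\tilde d^{in}_t(B)$ as defined in the context. For every integer $t \geq 2$ the multiplicative factors $MF^{(t)}(B) = q_{BB}\,\tilde d^{in}_t(B)$ and $MF^{(t)}(R) = q_{RB}\,\tilde d^{in}_t(B)$ satisfy $$MF^{(t)}(B) \geq MF^{(t)}(R)$$ for all $0 \leq r \leq 0.5$ and all $0 \leq \rho \leq 1$.
   Context: The BPAM with two communities (red $R$, blue $B$) grows a directed network one node at a time. A new node $u$ is labeled $R$ with probability $r$ and $B$ with probability $1-r$, where $0\le r\le 1/2$, so red is the minority. The node $u$ then picks a target $v$ with probability proportional to its current degree, $\mathbb{P}(v \text{ chosen}) = d_t(v)/\sum_{w} d_t(w)$. If $u$ and $v$ have the same label, the directed edge $(u,v)$ is created. If the labels differ, the edge is accepted with probability $\rho\in[0,1]$, and otherwise the choice is repeated until an edge is formed. This process is repeated $d$ times, so that every node has outdegree $d$. The network has $N$ nodes. Let $\alpha_N$ be the total degree of red nodes divided by the total degree $2Nd$, and let $\alpha=\lim_{N\to\infty}\mathbb{E}[\alpha_N]$. It is known that $\alpha<r$ (the power inequality). Define $$p^{out}_{RB}=\frac{\rho(1-\alpha)}{\alpha+\rho(1-\alpha)},\qquad p^{out}_{BB}=\frac{1-\alpha}{\rho\alpha+1-\alpha}.$$ Let $D_B=\frac{r\rho}{\alpha+\rho(1-\alpha)}+\frac{1-r}{\alpha\rho+1-\alpha}$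 and $D_R=\frac{r}{\alpha+\rho(1-\alpha)}+\frac{\rho(1-r)}{\alpha\rho+1-\alpha}$. Define $$p^{in}_{BB}=\frac{(1-r)/(\alpha\rho+1-\alpha)}{D_B},\qquad p^{in}_{BR}=\frac{\rho r/(\alpha+\rho(1-\alpha))}{D_B},$$ $$p^{in}_{RR}=\frac{r/(\alpha+\rho(1-\alpha))}{D_R},\qquad p^{in}_{RB}=\frac{\rho(1-r)/(\alpha\rho+1-\alpha)}{D_R}.$$ Set $$q_{BB}=p^{in}_{BB}p^{out}_{BB}+p^{in}_{BR}p^{out}_{RB},\qquad q_{RB}=p^{in}_{RB}p^{out}_{BB}+p^{in}_{RR}p^{out}_{RB}.$$ These are the probabilities that a node of color $B$ (respectively $R$) has an in-neighbor which in turn has an out-edge to a blue node. The size-biased $t$-th indegree moment of the blue community is $$\tilde d^{in}_t(B)=\frac{\sum_{u\in B}(d^{in}(u))^t}{\sum_{u\in B}d^{in}(u)}.$$ In the paper's mean-field analysis of HITS, the authority score after $t$ iterations is approximated by $a^{(t)}(v\in C)\approx d^{in}(v)(d-1)MF^{(t)}(C)$. Here the multiplicative factors are $MF^{(t)}(R)=q_{RB}\tilde d^{in}_t(B)$ and $MF^{(t)}(B)=q_{BB}\tilde d^{in}_t(B)$. *)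

(* Defs.v *)
From mathcomp Require Import all_boot all_order all_algebra.
Set Implicit Arguments. Unset Strict Implicit. Unset Printing Implicit Defensive.
Import Order.TTheory GRing.Theory Num.Theory.
Local Open Scope ring_scope.

Section BPAM.
Variable R : realFieldType.
Variables (r rho alpha : R).

Definition p_out_RB : R := rho * (1 - alpha) / (alpha + rho * (1 - alpha)).
Definition p_out_BB : R := (1 - alpha) / (rho * alpha + 1 - alpha).

Definition D_B : R :=
  r * rho / (alpha + rho * (1 - alpha)) + (1 - r) / (alpha * rho + 1 - alpha).
Definition D_R : R :=
  r / (alpha + rho * (1 - alpha)) + rho * (1 - r) / (alpha * rho + 1 - alpha).

Definition p_in_BB : R := ((1 - r) / (alpha * rho + 1 - alpha)) / D_B.
Definition p_in_BR : R := (rho * r / (alpha + rho * (1 - alpha))) / D_B.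
Definition p_in_RR : R := (r / (alpha + rho * (1 - alpha))) / D_R.
Definition p_in_RB : R := (rho * (1 - r) / (alpha * rho + 1 - alpha)) / D_R.

Definition q_BB : R := p_in_BB * p_out_BB + p_in_BR * p_out_RB.
Definition q_RB : R := p_in_RB * p_out_BB + p_in_RR * p_out_RB.
End BPAM.

(* Size-biased t-th indegree moment of the blue community, given the list
   of indegrees of the blue nodes: sum d^t / sum d. *)
Definition size_biased_moment (R : realFieldType) (t : nat) (degs : seq nat) : R :=
  (\sum_(d <- degs) (d%:R : R) ^+ t) / (\sum_(d <- degs) (d%:R : R)).

Definition MF_B (R : realFieldType) (r rho alpha : R) (t : nat) (degsB : seq nat) : R :=
  q_BB r rho alpha * size_biased_moment R t degsB.
Definition MF_R (R : realFieldType) (r rho alpha : R) (t : nat) (degsB : seq nat) : R :=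
  q_RB r rho alpha * size_biased_moment R t degsB.

(* Main.v *)
Require Import Defs.
From mathcomp Require Import all_boot all_order all_algebra.
From mathcomp Require Import ring lra.
Import Order.TTheory GRing.Theory Num.Theory.
Local Open Scope ring_scope.

Lemma key {R : realFieldType} (P Q x y rho : R) :
  0 < x -> 0 < y -> 0 <= rho -> rho <= 1 -> Q <= P ->
  (rho * y * P + x * Q) / (x + rho * y) <= (y * P + rho * x * Q) / (rho * x + y).
Proof.
move=> x0 y0 r0 r1 QP.
have h1 : 0 < x + rho * y by nra.
have h2 : 0 < rho * x + y by nra.
rewrite -subr_ge0.
have -> : (y * P + rho * x * Q) / (rho * x + y) - (rho * y * P + x * Q) / (x + rho * y)
  = ((P - Q) * x * y * (1 - rho ^+ 2)) / ((x + rho * y) * (rho * x + y)).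
  field. by apply/andP; split; rewrite lt0r_neq0.
apply: divr_ge0; last by nra.
apply: mulr_ge0; last by nra.
apply: mulr_ge0; last lra.
apply: mulr_ge0; lra.
Qed.

Lemma mom_ge0 (R : realFieldType) t degs : 0 <= size_biased_moment R t degs.
Proof.
rewrite /size_biased_moment; apply: divr_ge0; apply: sumr_ge0 => d _ //.
exact: exprn_ge0.
Qed.

Theorem proposition1 (R : realFieldType) (r rho alpha : R) (t : nat)
    (degsB : seq nat) :
  0 <= r -> r <= 2^-1 -> 0 <= rho -> rho <= 1 ->
  0 <= alpha -> alpha < r ->
  (2 <= t)%N ->
  MF_R r rho alpha t degsB <= MF_B r rho alpha t degsB.
Proof.
move=> r0 rh r1 rh1 a0 ar _.
rewrite /MF_R /MF_B; apply: ler_wpM2r; first exact: mom_ge0.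
have a1 : alpha < 1 by apply: (lt_le_trans ar); apply: (le_trans rh); rewrite invf_le1 // ?ler1n // ltr0n.
have Bp : 0 < alpha * rho + 1 - alpha.
  have : 0 <= alpha * rho by apply: mulr_ge0.
  lra.
have PQ : p_out_RB rho alpha <= p_out_BB rho alpha.
  rewrite /p_out_RB /p_out_BB.
  have [A0|Ap] := eqVneq (alpha + rho * (1 - alpha)) 0.
    rewrite A0 invr0 mulr0; apply: divr_ge0; nra.
  have Ap' : 0 < alpha + rho * (1 - alpha) by rewrite lt0r Ap /=; nra.
  rewrite ler_pdivrMr // mulrAC ler_pdivlMr; last by rewrite mulrC.
  have h : 0 <= (1 - alpha) * alpha * (1 - rho ^+ 2).
    apply: mulr_ge0; [apply: mulr_ge0; lra | nra].
  rewrite -subr_ge0; apply: le_trans h _; rewrite le_eqVlt; apply/orP; left; apply/eqP; ring.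
have [A0|Ap] := eqVneq (alpha + rho * (1 - alpha)) 0.
  have a00 : alpha = 0 by nra.
  have rh0 : rho = 0 by nra.
  rewrite /q_RB /q_BB /p_in_RB /p_in_RR /D_R /p_out_RB A0 rh0 !(invr0, mul0r, mulr0, add0r, addr0).
  rewrite /p_in_BB /p_out_BB /D_B a00 !(mul0r, mulr0, add0r, subr0, addr0, invr1, mulr1, div1r).
  apply: divr_ge0; lra.
have Ap' : 0 < alpha + rho * (1 - alpha) by rewrite lt0r Ap /=; nra.
set A := alpha + rho * (1 - alpha) in Ap Ap'.
set x := r / A. set y := (1 - r) / (alpha * rho + 1 - alpha).
have x0 : 0 < x by apply: divr_gt0; lra.
have y0 : 0 < y by apply: divr_gt0; lra.
have := @key _ _ _ x y rho x0 y0 r1 rh1 PQ.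
rewrite /q_RB /q_BB /p_in_RB /p_in_RR /p_in_BB /p_in_BR /D_R /D_B -/A -/x -/y.
have -> : rho * r / A = rho * x by rewrite /x mulrA.
have -> : rho * (1 - r) / (alpha * rho + 1 - alpha) = rho * y by rewrite /y mulrA.
have -> : r * rho / A = rho * x by rewrite /x; ring.
set P := p_out_BB rho alpha. set Q := p_out_RB rho alpha.
move=> H.
have -> : rho * y / (x + rho * y) * P + x / (x + rho * y) * Q = (rho * y * P + x * Q) / (x + rho * y) by ring.
have -> : y / (rho * x + y) * P + rho * x / (rho * x + y) * Q = (y * P + rho * x * Q) / (rho * x + y) by ring.
exact: H.
Qed.
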